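(* For every $n\in\mathbb{N}$, the pair $(\mathcal{A}_n,\mathcal{R}_{\mathrm{lps}_n})$ is a finite and complete presentation for the monoid $\mathrm{lps}_n$, and the pair $(\mathcal{A}_n,\mathcal{R}_{\mathrm{rps}_n})$ is a complete presentation for the monoid $\mathrm{rps}_n$.
   Context: Let $\mathcal{A}=\{1<2<3<\cdots\}$ be the positive integers viewed as a totally ordered alphabet and $\mathcal{A}_n=\{1<2<\cdots<n\}$. An lPS tableau is a finite (possibly empty) sequence of nonempty bottom-justified columns of boxes filled with elements of $\mathcal{A}$, such that the entries of each column are strictly decreasing from top to bottom and the bottom entries of the columns form a weakly increasing sequence from left to right. An rPS tableau is defined in the same way but with columns weakly decreasing from top to bottom and the bottom row strictly increasing from left to right. Right insertion of a symbol $a$ into an lPS tableau $B$: if $a$ is greater than or equal to every entry of the bottom row, append a new column consisting of $a$ at the right end; otherwise, let $z$ be the leftmost bottom-row entry with $z>a$ and put $a$ in a new box at the bottom of the column of $z$ (the previous entries of that column move up one box). Right insertion into an rPS tableau is the same except that a new column is created iff $a$ is strictly greater than every bottom-row entry, and otherwise $z$ is the leftmost bottom-row entry with $z\geq a$. For a word $w=w_1\cdots w_k$, $\mathfrak{R}_\ell(w)$ (resp. $\mathfrak{R}_r(w)$) is the tableau obtained by starting with the empty lPS (resp. rPS) tableau and right-inserting $w_1,\dots,w_k$ in this order. The monoid $\mathrm{lps}_n$ (resp. $\mathrm{rps}_n$) is the quotient of the free monoid $\mathcal{A}_n^*$ by the congruence $u\equiv v\iff \mathfrak{R}_\ell(u)=\mathfrak{R}_\ell(v)$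 (resp. $\mathfrak{R}_r(u)=\mathfrak{R}_r(v)$). $\mathcal{R}_{\mathrm{lps}_n}=\{(yux,yxu): m\geq 1,\ x,y,u_1,\dots,u_m\in\mathcal{A}_n,\ u=u_m\cdots u_1,\ x<y\leq u_1<\cdots<u_m\}$ and $\mathcal{R}_{\mathrm{rps}_n}=\{(yux,yxu): m\geq 1,\ x,y,u_1,\dots,u_m\in\mathcal{A}_n,\ u=u_m\cdots u_1,\ x\leq y< u_1\leq\cdots\leq u_m\}$. A presentation $(\Sigma,\mathcal{R})$ defines $M$ if $M\cong\Sigma^*/\mathcal{R}^\#$, where $\mathcal{R}^\#$ is the congruence generated by $\mathcal{R}$. Viewing $\mathcal{R}$ as a rewriting system with rules $r^+\to r^-$ for $(r^+,r^-)\in\mathcal{R}$ (applied to factors), the presentation is complete if the rewriting system is noetherian (no infinite chain of rewrites) and confluent. *)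

(* Defs.v *)
From mathcomp Require Import all_boot.
From Stdlib Require Import Relations.Relation_Operators.
Set Implicit Arguments. Unset Strict Implicit. Unset Printing Implicit Defensive.

Definition word := seq nat.

Definition inA (n : nat) (w : word) : bool := all (fun a => 0 < a <= n) w.

(* A PS tableau is a sequence of columns (left to right); each column is
   listed from bottom to top, so its head is its bottom-row entry. *)
Definition tableau := seq (seq nat).

Definition is_lPS (B : tableau) : Prop :=
  all (fun c => c != [::]) B /\
  all (fun c => sorted ltn c) B /\       (* strictly decreasing top-to-bottom *)
  sorted leq (map (head 0) B).

Definition is_rPS (B : tableau) : Prop :=
  all (fun c => c != [::]) B /\
  all (fun c => sorted leq c) B /\       (* weakly decreasing top-to-bottom *)
  sorted ltn (map (head 0) B).

Fixpoint rins_l (a : nat) (B : tableau) : tableau :=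
  match B with
  | [::] => [:: [:: a]]
  | c :: B' => if a < head 0 c then (a :: c) :: B' else c :: rins_l a B'
  end.

Fixpoint rins_r (a : nat) (B : tableau) : tableau :=
  match B with
  | [::] => [:: [:: a]]
  | c :: B' => if a <= head 0 c then (a :: c) :: B' else c :: rins_r a B'
  end.

Definition Rl (w : word) : tableau := foldl (fun B a => rins_l a B) [::] w.
Definition Rr (w : word) : tableau := foldl (fun B a => rins_r a B) [::] w.

Definition lps_cong (n : nat) (u v : word) : Prop := inA n u /\ inA n v /\ Rl u = Rl v.
Definition rps_cong (n : nat) (u v : word) : Prop := inA n u /\ inA n v /\ Rr u = Rr v.

(* R_lps_n : pairs (y u x, y x u), u = u_m ... u_1, x < y <= u_1 < ... < u_m,
   all letters in A_n, m >= 1.  The list s = [:: u_1; ...; u_m]. *)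
Definition R_lps (n : nat) (l r : word) : Prop :=
  exists (x y : nat) (s : seq nat),
    [/\ 0 < size s, inA n (x :: y :: s), x < y, y <= head 0 s & sorted ltn s] /\
    l = y :: rev s ++ [:: x] /\ r = y :: x :: rev s.

Definition R_rps (n : nat) (l r : word) : Prop :=
  exists (x y : nat) (s : seq nat),
    [/\ 0 < size s, inA n (x :: y :: s), x <= y, y < head 0 s & sorted leq s] /\
    l = y :: rev s ++ [:: x] /\ r = y :: x :: rev s.

Definition rstep (R : word -> word -> Prop) (u v : word) : Prop :=
  exists p q l r, R l r /\ u = p ++ l ++ q /\ v = p ++ r ++ q.

Definition gen_cong (R : word -> word -> Prop) : word -> word -> Prop :=
  clos_refl_sym_trans word (rstep R).

Definition rstar (R : word -> word -> Prop) : word -> word -> Prop :=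
  clos_refl_trans word (rstep R).

(* (A_n, R) defines the monoid A_n^* / cong, with the identity on generators:
   the congruences R^# and cong coincide on A_n^*. *)
Definition defines (n : nat) (R : word -> word -> Prop)
    (cong : word -> word -> Prop) : Prop :=
  forall u v, inA n u -> inA n v -> (gen_cong R u v <-> cong u v).

Definition finite_rel (R : word -> word -> Prop) : Prop :=
  exists L : seq (word * word), forall l r, R l r <-> (l, r) \in L.

Definition noetherian (n : nat) (R : word -> word -> Prop) : Prop :=
  ~ exists f : nat -> word, inA n (f 0) /\ forall i, rstep R (f i) (f i.+1).

Definition confluent (n : nat) (R : word -> word -> Prop) : Prop :=
  forall w u v, inA n w -> rstar R w u -> rstar R w v ->
    exists z, rstar R u z /\ rstar R v z.

Definition complete (n : nat) (R : word -> word -> Prop) : Prop :=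
  noetherian n R /\ confluent n R.

(* Main.v *)
Require Import Defs.
From mathcomp Require Import all_boot zify.
From Stdlib Require Import Relations.Relation_Operators Relations.Operators_Properties.
Set Implicit Arguments. Unset Strict Implicit. Unset Printing Implicit Defensive.

Definition Ir (b : bool) (a z : nat) : bool := if b then a < z else a <= z.
Definition Br (b : bool) (a z : nat) : bool := if b then a <= z else a < z.

Fixpoint rins (b : bool) (a : nat) (B : tableau) : tableau :=
  match B with
  | [::] => [:: [:: a]]
  | c :: B' => if Ir b a (head 0 c) then (a :: c) :: B' else c :: rins b a B'
  end.

Definition RR b (w : word) : tableau := foldl (fun B a => rins b a B) [::] w.

Definition Rule b n (l r : word) : Prop :=
  exists (x y : nat) (s : seq nat),
    [/\ 0 < size s, inA n (x :: y :: s), Ir b x y, Br b y (head 0 s) & sorted (Ir b) s] /\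
    l = y :: rev s ++ [:: x] /\ r = y :: x :: rev s.

Lemma R_lpsE n : R_lps n = Rule true n. Proof. by []. Qed.
Lemma R_rpsE n : R_rps n = Rule false n. Proof. by []. Qed.

Lemma rins_lE a B : rins_l a B = rins true a B.
Proof. by elim: B => //= c B ->. Qed.
Lemma rins_rE a B : rins_r a B = rins false a B.
Proof. by elim: B => //= c B ->. Qed.

Lemma foldl_ext (f g : tableau -> nat -> tableau) : f =2 g -> forall w B, foldl f B w = foldl g B w.
Proof. by move=> fg; elim => //= a w IH B; rewrite fg IH. Qed.

Lemma Rl_E w : Rl w = RR true w.
Proof. by apply: foldl_ext => B a; rewrite rins_lE. Qed.
Lemma Rr_E w : Rr w = RR false w.
Proof. by apply: foldl_ext => B a; rewrite rins_rE. Qed.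

Lemma F1 b y h u : ~~ Ir b y h -> Br b y u -> ~~ Ir b u h.
Proof. by case: b => /=; lia. Qed.
Lemma F2 b y u : Br b y u -> ~~ Ir b u y.
Proof. by case: b => /=; lia. Qed.
Lemma F3 b x y u : Ir b x y -> Br b y u -> ~~ Ir b u x.
Proof. by case: b => /=; lia. Qed.
Lemma F4 b y h u : Br b y h -> Ir b h u -> Br b y u.
Proof. by case: b => /=; lia. Qed.
Lemma F5 b a b1 b2 : Ir b a b1 -> Br b b1 b2 -> Ir b a b2.
Proof. by case: b => /=; lia. Qed.
Lemma F6 b a p : ~~ Ir b a p -> Br b p a.
Proof. by case: b => /=; lia. Qed.
Lemma F7 b a h h' : Ir b a h -> Br b h h' -> Br b a h'.
Proof. by case: b => /=; lia. Qed.
Lemma Ir_trans b : transitive (Ir b).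
Proof. by case: b => x y z /=; lia. Qed.

Lemma rins_split b y B : exists P c Q,
  [/\ rins b y B = P ++ c :: Q, head 0 c = y & all (fun c => ~~ Ir b y (head 0 c)) P].
Proof.
elim: B => [|c0 B [P [c [Q [E1 E2 E3]]]]] /=; first by exists [::], [:: y], [::].
case: ifP => H; first by exists [::], (y :: c0), B.
by exists (c0 :: P), c, Q; rewrite E1 /= H.
Qed.

Lemma rins_catA b x c P Q : Ir b x (head 0 c) ->
  rins b x (P ++ c :: Q) = rins b x (P ++ [:: c]) ++ Q.
Proof.
move=> H; elim: P => [|c0 P IH] /=; first by rewrite H.
by case: ifP => _ //=; rewrite ?IH // -catA.
Qed.

Lemma rins_catB b a K Q : all (fun c => ~~ Ir b a (head 0 c)) K ->
  rins b a (K ++ Q) = K ++ rins b a Q.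
Proof. by elim: K => //= c K IH /andP [/negbTE -> /IH ->]. Qed.

Lemma foldl_catB b us K Q : (forall u, u \in us -> all (fun c => ~~ Ir b u (head 0 c)) K) ->
  foldl (fun B a => rins b a B) (K ++ Q) us = K ++ foldl (fun B a => rins b a B) Q us.
Proof.
elim: us Q => //= u us IH Q H.
by rewrite rins_catB ?H ?mem_head // IH // => v vi; apply: H; rewrite in_cons vi orbT.
Qed.

Lemma rins_heads b (Pr : pred nat) x L : all (fun c => Pr (head 0 c)) L -> Pr x ->
  all (fun c => Pr (head 0 c)) (rins b x L).
Proof.
move=> + Px; elim: L => [|c L IH] /=; first by rewrite Px.
by case/andP => Pc PL; case: ifP => _ /=; rewrite ?Px ?Pc ?PL ?IH.
Qed.

Lemma sound_rule b n l r : Rule b n l r -> forall B,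
  foldl (fun B a => rins b a B) B l = foldl (fun B a => rins b a B) B r.
Proof.
move=> [x [y [s [[s0 _ Ixy Bys ss] [-> ->]]]]] B.
have Bu : forall u, u \in rev s -> Br b y u.
  move=> u; rewrite mem_rev; case: s s0 Bys ss => //= h t _ Byh pt.
  rewrite in_cons => /orP [/eqP -> //|ut].
  by apply: (F4 Byh); move/allP: (order_path_min (@Ir_trans b) pt); apply.
have [P [c [Q [E1 E2 E3]]]] := rins_split b y B.
rewrite /= foldl_cat /= E1 -cat_rcons foldl_catB; last first.
  move=> u /Bu Hu; rewrite all_rcons E2 (F2 Hu) /=.
  by apply/allP => c' /(allP E3) H; apply: F1 H Hu.
rewrite !cat_rcons (@rins_catA _ _ _ _ (foldl _ Q _)) ?E2 // (@rins_catA _ _ _ _ Q) ?E2 // foldl_catB // => u /Bu Hu; apply: (@rins_heads _ (fun h => ~~ Ir b u h)).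
  rewrite all_cat /= E2 (F2 Hu) /= !andbT.
  by apply/allP => c' /(allP E3) H; apply: F1 H Hu.
exact: F3 Ixy Hu.
Qed.

Lemma rstep_RR b n u v : rstep (Rule b n) u v -> RR b u = RR b v.
Proof.
move=> [p [q [l [r [H [-> ->]]]]]].
by rewrite /RR !foldl_cat (sound_rule H).
Qed.

Lemma gen_RR b n u v : gen_cong (Rule b n) u v -> RR b u = RR b v.
Proof.
elim => //; first by move=> ? ? /rstep_RR.
by move=> ? ? ? _ -> _ ->.
Qed.

Lemma rstar_RR b n u v : rstar (Rule b n) u v -> RR b u = RR b v.
Proof.
elim => //; first by move=> ? ? /rstep_RR.
by move=> ? ? ? _ -> _ ->.
Qed.

Lemma rstep_inA b n u v : rstep (Rule b n) u v -> inA n u -> inA n v.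
Proof.
move=> [p [q [l [r [[x [y [s [[_ Hs _ _ _] [-> ->]]]]] [-> ->]]]]]].
rewrite /inA !all_cat /= all_rev => /and3P [-> _ ->].
by move: Hs; rewrite /inA /= => /and3P [-> -> ->].
Qed.

Lemma rstar_inA b n u v : rstar (Rule b n) u v -> inA n u -> inA n v.
Proof.
elim => //; first by move=> ? ? /rstep_inA; apply.
by move=> ? ? ? _ H1 _ H2 /H1 /H2.
Qed.

Lemma rstar_ctx R p q u v : rstar R u v -> rstar R (p ++ u ++ q) (p ++ v ++ q).
Proof.
elim.
- move=> x y [p' [q' [l [r [H [-> ->]]]]]]; apply: rt_step.
  by exists (p ++ p'), (q' ++ q), l, r; rewrite -!catA.
- by move=> ?; apply: rt_refl.
- by move=> ? ? ? _ H1 _ H2; apply: rt_trans H1 H2.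
Qed.

Lemma rstep1 b n x y s q : Rule b n (y :: rev s ++ [:: x]) (y :: x :: rev s) ->
  rstar (Rule b n) (y :: rev s ++ x :: q) (y :: x :: rev s ++ q).
Proof.
move=> H; apply: rt_step; exists [::], q, (y :: rev s ++ [:: x]), (y :: x :: rev s).
by rewrite /= -!catA.
Qed.

Definition valid b n (B : tableau) :=
  [&& all (fun c => c != [::]) B, all (sorted (Ir b)) B,
      sorted (Br b) (map (head 0) B) & all (inA n) B].

Definition read (B : tableau) : word := flatten (map rev B).

Lemma move_lem b n a : 0 < a <= n -> forall Cs h,
  all (fun c => c != [::]) Cs -> all (sorted (Ir b)) Cs ->
  path (Br b) h (map (head 0) Cs) -> all (inA n) Cs -> Ir b a h -> 0 < h <= n ->
  rstar (Rule b n) (h :: read Cs ++ [:: a]) (h :: a :: read Cs).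
Proof.
move=> Ha; elim => [|c Cs IH] h /=; first by move=> *; apply: rt_refl.
case: c => [|h' t] //= ne /andP [st ss] /andP [Bh pa] /andP [ic ia] Iah Hh.
rewrite /read /= -/(read Cs) rev_cons -cats1 -!catA /=.
have Hh' : 0 < h' <= n by move: ic; rewrite /inA /= => /andP [].
have := IH h' ne ss pa ia (F5 Iah Bh) Hh'.
move=> /(@rstar_ctx _ (h :: rev t) [::]); rewrite !cats0 /= => H1.
apply: rt_trans H1 _.
have := @rstep1 b n a h (h' :: t) (read Cs).
rewrite rev_cons -cats1 -!catA /=; apply.
exists a, h, (h' :: t); split; first split => //.
  by move: ic; rewrite /inA /= Ha Hh.
by rewrite rev_cons -cats1 -catA.
Qed.

Lemma ins_lem b n a : 0 < a <= n -> forall B, valid b n B ->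
  rstar (Rule b n) (read B ++ [:: a]) (read (rins b a B)).
Proof.
move=> Ha; elim => [|c B IH] /=; first by move=> _; apply: rt_refl.
case: c => [|h t] //= /and4P [/andP [_ ne] /andP [st ss] pa /andP [ic ia]].
have Hh : 0 < h <= n by move: ic; rewrite /inA /= => /andP [].
case: ifP => Iah.
  have := move_lem Ha ne ss pa ia Iah Hh.
  move=> /(@rstar_ctx _ (rev t) [::]); rewrite !cats0 /read /= !rev_cons -!cats1 -!catA /=.
  by apply.
have HB : valid b n B by apply/and4P; split => //; exact: path_sorted pa.
move: (IH HB) => /(@rstar_ctx _ (rev (h :: t)) [::]); rewrite !cats0 /read /= -catA.
by apply.
Qed.

Lemma rins_path b a B p : path (Br b) p (map (head 0) B) -> ~~ Ir b a p ->
  path (Br b) p (map (head 0) (rins b a B)).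
Proof.
elim: B p => [|c B IH] p /=; first by move=> _ /F6 ->.
case/andP => Bpc pa Nap; case: ifP => Iac /=.
  rewrite (F6 Nap) /=; case: B pa {IH} => //= c' B /andP [H ->].
  by rewrite (F7 Iac H).
by rewrite Bpc IH // Iac.
Qed.

Lemma rins_valid b n a B : 0 < a <= n -> valid b n B -> valid b n (rins b a B).
Proof.
move=> Ha /and4P [ne ss so ia]; apply/and4P; split.
- elim: B ne {ss so ia} => //= c B IH /andP [Hc HB]; case: ifP => _ /=; by rewrite ?Hc ?HB ?IH.
- elim: B ss {ne so ia} => //= c B IH /andP [sc HB]; case: ifP => Iac /=.
    by rewrite HB andbT; case: c sc Iac => //= h t -> ->.
  by rewrite sc IH.
- case: B so {ne ss ia} => //= c B; case: ifP => Iac /=.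
    case: B => //= c' B /andP [H ->]; by rewrite (F7 Iac H).
  by move=> H; apply: rins_path => //; rewrite Iac.
- elim: B ia {ne ss so} => /= [_|c B IH /andP [ic HB]]; first by rewrite /inA /= Ha.
  case: ifP => _ /=; first by rewrite HB andbT /inA /= Ha.
  by rewrite ic IH.
Qed.

Lemma RR_valid_gen b n w B : inA n w -> valid b n B ->
  valid b n (foldl (fun B a => rins b a B) B w).
Proof.
elim: w B => //= a w IH B /andP [Ha Hw] HB; exact: IH (rins_valid Ha HB).
Qed.

Lemma to_read b n w : inA n w -> rstar (Rule b n) w (read (RR b w)).
Proof.
elim/last_ind: w => [|w a IH]; first by move=> _; apply: rt_refl.
rewrite /inA all_rcons => /andP [Ha Hw].
rewrite /RR foldl_rcons -/(RR b w).
apply: rt_trans (ins_lem Ha (RR_valid_gen Hw (isT : valid b n [::]))).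
move: (IH Hw) => /(@rstar_ctx _ [::] [:: a]); by rewrite /= cats1.
Qed.

Fixpoint inv (w : word) : nat :=
  match w with [::] => 0 | a :: w' => count (fun b => b < a) w' + inv w' end.
Definition cross (u v : word) : nat := sumn [seq count (fun b => b < a) v | a <- u].

Lemma inv_cat u v : inv (u ++ v) = inv u + inv v + cross u v.
Proof.
elim: u => [|a u IH] /=; first by rewrite /cross /= addn0.
rewrite IH /cross /= count_cat -/(cross u v); lia.
Qed.

Lemma cross_perml u u' v : perm_eq u u' -> cross u v = cross u' v.
Proof. by move=> H; apply: perm_sumn; apply: perm_map. Qed.

Lemma cross_permr u v v' : perm_eq v v' -> cross u v = cross u v'.
Proof. by move=> /permP H; rewrite /cross; congr sumn; apply: eq_map => a; apply: H. Qed.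

Lemma cross1 t x : (forall a, a \in t -> x < a) -> cross t [:: x] = size t.
Proof.
elim: t => //= a t IH H; rewrite /cross /= -/(cross t [:: x]) IH.
  by rewrite H ?mem_head.
by move=> c ct; apply: H; rewrite in_cons ct orbT.
Qed.

Lemma F8 b x y u : Ir b x y -> Br b y u -> x < u.
Proof. by case: b => /=; lia. Qed.

Lemma Bu_lem b x y s : Ir b x y -> Br b y (head 0 s) -> sorted (Ir b) s ->
  forall z, z \in s -> x < z.
Proof.
case: s => //= h t Ixy Byh pt z.
rewrite in_cons => /orP [/eqP -> //|ut]; first exact: F8 Ixy Byh.
apply: (F8 Ixy); apply: (F4 Byh); move/allP: (order_path_min (@Ir_trans b) pt); apply; exact: ut.
Qed.

Lemma inv_step b n u v : rstep (Rule b n) u v -> inv v < inv u.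
Proof.
move=> [p [q [l [r [[x [y [s [[s0 _ Ixy Bys ss] [El Er]]]]] [-> ->]]]]]].
have Bu : forall z, z \in rev s -> x < z.
  by move=> z; rewrite mem_rev; apply: (Bu_lem Ixy Bys ss).
have plr : perm_eq l r by rewrite El Er perm_cons cats1 perm_rcons perm_refl.
rewrite !inv_cat (cross_perml _ plr) (@cross_permr p (l ++ q) (r ++ q)) ?perm_cat2r //.
suff : inv r < inv l by lia.
rewrite El Er /= inv_cat !count_cat /= (cross1 Bu) size_rev.
have -> : count (fun b0 => b0 < x) (rev s) = 0.
  by apply/eqP; rewrite -leqn0 leqNgt -has_count; apply/hasP => [[a /Bu]]; lia.
case: (x < y) => /=; lia.
Qed.

Lemma noeth b n : noetherian n (Rule b n).
Proof.
move=> [f [_ Hf]].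
have H : forall i, inv (f i) + i <= inv (f 0).
  elim => [|i IH]; first by rewrite addn0.
  have := inv_step (Hf i); lia.
have := H (inv (f 0)).+1; lia.
Qed.

Lemma confl b n : confluent n (Rule b n).
Proof.
move=> w u v Hw Hu Hv; exists (read (RR b w)); split.
  rewrite (rstar_RR Hu); apply: to_read; exact: rstar_inA Hu Hw.
rewrite (rstar_RR Hv); apply: to_read; exact: rstar_inA Hv Hw.
Qed.

Lemma defs b n u v : inA n u -> inA n v ->
  (gen_cong (Rule b n) u v <-> inA n u /\ inA n v /\ RR b u = RR b v).
Proof.
move=> Hu Hv; split; first by move=> /gen_RR.
move=> [_ [_ E]].
rewrite /gen_cong; apply: (@rst_trans _ _ _ (read (RR b u))).
  apply: clos_rt_clos_rst; exact: to_read.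
rewrite E; apply: rst_sym; apply: clos_rt_clos_rst; exact: to_read.
Qed.

Fixpoint allle (n k : nat) : seq word :=
  if k is k'.+1 then [::] :: [seq a :: w | a <- iota 1 n, w <- allle n k'] else [:: [::]].

Lemma mem_allle n w k : inA n w -> size w <= k -> w \in allle n k.
Proof.
elim: w k => [|a w IH] [|k] //= Hw; rewrite ?in_cons ?eqxx // => Hs.
move: Hw => /andP [Ha Hw]; apply/orP; right.
apply: (allpairs_f (fun a w => a :: w)); first by rewrite mem_iota; lia.
exact: IH.
Qed.

Definition condb n (t : nat * nat * seq nat) : bool :=
  [&& 0 < size t.2, inA n [:: t.1.1, t.1.2 & t.2], t.1.1 < t.1.2, t.1.2 <= head 0 t.2 & sorted ltn t.2].

Definition Tl n : seq (nat * nat * seq nat) :=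
  [seq (xy.1, xy.2, s) | xy <- [seq (x, y) | x <- iota 1 n, y <- iota 1 n], s <- allle n n].

Definition Ll n : seq (word * word) :=
  [seq (t.1.2 :: rev t.2 ++ [:: t.1.1], [:: t.1.2, t.1.1 & rev t.2]) | t <- Tl n & condb n t].

Lemma finite_lps n : finite_rel (R_lps n).
Proof.
exists (Ll n) => l r; split.
  move=> [x [y [s [[s0 Hi Hxy Hys ss] [-> ->]]]]].
  have Hc : condb n (x, y, s) by apply/and5P.
  apply/mapP; exists (x, y, s) => //; rewrite mem_filter Hc /=.
  move: Hi; rewrite /inA /= => /and3P [Hx Hy Hs].
  rewrite /Tl; apply/allpairsP; exists ((x, y), s); split => //.
    by apply/allpairsP; exists (x, y); rewrite !mem_iota /=; split => //; lia.
  apply: mem_allle => //.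
  have -> : n = size (iota 1 n) by rewrite size_iota.
  apply: uniq_leq_size; first exact: (sorted_uniq ltn_trans ltnn).
  by move=> z zs; rewrite mem_iota; move/allP: Hs => /(_ z zs); lia.
move/mapP => [[[x y] s]]; rewrite mem_filter => /andP [Hc _] [-> ->].
move: Hc; rewrite /condb /= => /and5P [s0 Hi Hxy Hys ss].
by exists x, y, s.
Qed.

Theorem theorem5p5 (n : nat) :
  (defines n (R_lps n) (lps_cong n) /\ finite_rel (R_lps n) /\ complete n (R_lps n)) /\
  (defines n (R_rps n) (rps_cong n) /\ complete n (R_rps n)).
Proof.
split; [split; [|split] | split].
- move=> u v Hu Hv; rewrite R_lpsE /lps_cong !Rl_E; exact: defs.
- exact: finite_lps.
- rewrite R_lpsE; split; [exact: noeth | exact: confl].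
- move=> u v Hu Hv; rewrite R_rpsE /rps_cong !Rr_E; exact: defs.
- rewrite R_rpsE; split; [exact: noeth | exact: confl].
Qed.
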